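(* Let $m\ge1$ and let $u=u_1\cdots u_r$ and $v=v_1\cdots v_s$ be weakly increasing words with letters in $[m]=\{1,\dots,m\}$, with $r\le s$. Let $c=(\text{length of the first row of }P(uv))-s$. Then for every $k\ge1$, $$v^{(k)}_t<u^{(k)}_{t+c}\quad\text{for all } t\in[rk-c],$$ where $x_t$ denotes the $t$-th letter of a word $x$.
   Context: $P(w)$ is the Robinson–Schensted row-insertion tableau of the word $w$, and $uv$ is concatenation. For a word $x=x_1\cdots x_n$, $x+m=(x_1+m)\cdots(x_n+m)$, and $x^{(k)}=x\,(x+m)\,(x+2m)\cdots(x+(k-1)m)$ (concatenation, with the given $m$). *)

(* Defs.v *)
From mathcomp Require Import all_boot.
Set Implicit Arguments. Unset Strict Implicit. Unset Printing Implicit Defensive.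

(* Words are sequences of positive naturals; a tableau is a list of rows,
   top row first, each row a weakly increasing list. *)

Fixpoint ins_row (row : seq nat) (x : nat) : seq nat * option nat :=
  match row with
  | [::] => ([:: x], None)
  | y :: row' =>
      if x < y then (x :: row', Some y)
      else let: (r, b) := ins_row row' x in (y :: r, b)
  end.

Fixpoint rs_insert (t : seq (seq nat)) (x : nat) : seq (seq nat) :=
  match t with
  | [::] => [:: [:: x]]
  | row :: t' =>
      let: (row', b) := ins_row row x in
      match b with
      | None => row' :: t'
      | Some y => row' :: rs_insert t' y
      end
  end.

Definition RS_P (w : seq nat) : seq (seq nat) := foldl rs_insert [::] w.

Definition first_row_len (w : seq nat) : nat := size (head [::] (RS_P w)).

Definition shift_word (x : seq nat) (m : nat) : seq nat := map (fun a => a + m) x.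

Definition word_pow (x : seq nat) (m k : nat) : seq nat :=
  flatten [seq shift_word x (i * m) | i <- iota 0 k].

(* 1-indexed letter x_t. *)
Definition letter (x : seq nat) (t : nat) : nat := nth 0 x t.-1.

(* Main.v *)
Require Import Defs.
From mathcomp Require Import all_boot zify.

Definition frow (row : seq nat) (x : nat) := (ins_row row x).1.
Definition Frow (w : seq nat) := foldl frow [::] w.

Lemma head_rs t x : head [::] (rs_insert t x) = frow (head [::] t) x.
Proof. case: t => [|row t'] //=; rewrite /frow; by case: (ins_row row x) => r [b|]. Qed.

Lemma head_fold t w : head [::] (foldl rs_insert t w) = foldl frow (head [::] t) w.
Proof. elim: w t => [|x w IH] t //=; by rewrite IH head_rs. Qed.

Lemma frl_F w : first_row_len w = size (Frow w).
Proof. by rewrite /first_row_len /RS_P head_fold. Qed.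

Lemma ins_mono z row x : count (fun a => a <= z) row <= count (fun a => a <= z) (frow row x).
Proof.
rewrite /frow; elim: row => [|y row IH] //=.
case: ifP => hxy /=.
  by rewrite leq_add2r; case hy: (y <= z) => //; rewrite (leq_trans (ltnW hxy) hy).
by move: IH; case: (ins_row row x) => r b /= IH; rewrite leq_add2l.
Qed.

Lemma ins_step row x : (count (fun a => a <= x) row).+1 <= count (fun a => a <= x) (frow row x).
Proof.
rewrite /frow; elim: row => [|y row IH] /=; first by rewrite leqnn.
case: ifP => hxy /=.
  by rewrite leqnn (leqNgt y x) hxy.
by move: IH; case: (ins_row row x) => r b /= IH; rewrite -addnS leq_add2l.
Qed.

Lemma foldA z row q : count (fun a => a <= z) row <= count (fun a => a <= z) (foldl frow row q).
Proof. elim: q row => //= x q IH row; exact: leq_trans (ins_mono z row x) (IH _). Qed.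

Lemma foldB row z0 q : sorted leq (z0 :: q) ->
  count (fun a => a <= z0) row + size q <= count (fun a => a <= last z0 q) (foldl frow row q).
Proof.
elim: q row z0 => [|x q IH] row z0 /=; first by rewrite addn0.
move/andP=> [hz hs].
have H3 := IH (frow row x) x hs.
have H2 := ins_step row x.
have H1 : count (fun a => a <= z0) row <= count (fun a => a <= x) row.
  by apply: sub_count => a /= h; exact: leq_trans h hz.
lia.
Qed.

Lemma split_sorted (P : pred nat) u : (forall a b, a <= b -> P b -> P a) -> sorted leq u ->
  u = filter P u ++ filter (predC P) u.
Proof.
move=> hP; elim: u => [|x u IH] //= hs.
have hsu := path_sorted hs.
have hall := order_path_min leq_trans hs.
case hx: (P x) => /=.
  by rewrite -(IH hsu).
have h1 : filter P u = [::].
  rewrite (@eq_in_filter _ _ pred0) ?filter_pred0 // => a /(allP hall) hxa /=.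
  by apply/negbTE/negP => /(hP _ _ hxa); rewrite hx.
have h2 : filter (predC P) u = u.
  rewrite (@eq_in_filter _ _ predT) ?filter_predT // => a /(allP hall) hxa /=.
  by apply/negP => /(hP _ _ hxa); rewrite hx.
by rewrite h1 h2.
Qed.

Lemma c_bound u v a : sorted leq u -> sorted leq v ->
  count (fun b => b <= a) u + count (predC (fun b => b < a)) v <= size (Frow (u ++ v)).
Proof.
move=> hu hv.
have eu := split_sorted (fun b => b <= a) u (fun x y hxy hy => leq_trans hxy hy) hu.
have ev := split_sorted (fun b => b < a) v (fun x y hxy hy => leq_ltn_trans hxy hy) hv.
set ulo := filter _ u in eu; set uhi := filter _ u in eu.
set vlo := filter _ v in ev; set vhi := filter _ v in ev.
have hulo : sorted leq (0 :: ulo).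
  rewrite /= path_min_sorted; last by apply/allP.
  exact: (sorted_filter leq_trans).
have h1 := foldB [::] 0 ulo hulo.
have h2 : count (fun b => b <= last 0 ulo) (Frow ulo) <= count (fun b => b <= a) (Frow ulo).
  apply: sub_count => b /= hb; apply: leq_trans hb _.
  have := mem_last 0 ulo; rewrite inE => /orP [/eqP -> // | ].
  by rewrite mem_filter => /andP [].
have h3 := foldA a (Frow ulo) (uhi ++ vlo).
have hvhi : sorted leq (a :: vhi).
  rewrite /= path_min_sorted; first exact: (sorted_filter leq_trans).
  apply/allP => b.
  by rewrite mem_filter /= -leqNgt => /andP [].
have h4 := foldB (foldl frow (Frow ulo) (uhi ++ vlo)) a vhi hvhi.
have h5 := count_size (fun b => b <= last a vhi) (foldl frow (foldl frow (Frow ulo) (uhi ++ vlo)) vhi).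
have -> : Frow (u ++ v) = foldl frow (foldl frow (Frow ulo) (uhi ++ vlo)) vhi.
  by rewrite eu ev /Frow -!foldl_cat !catA.
rewrite -!size_filter -/ulo -/vhi.
rewrite /= add0n in h1.
rewrite -/(Frow ulo) in h1. lia.
Qed.

Lemma cnt_le_nth s i y : sorted leq s -> i < size s -> nth 0 s i <= y ->
  i.+1 <= count (fun a => a <= y) s.
Proof.
elim: s i => [|x s IH] i //= hs.
have hs' := path_sorted hs.
have hall := order_path_min leq_trans hs.
case: i => [|i] /= hi hy; first by rewrite hy.
have hx : x <= nth 0 s i by apply: (allP hall); exact: mem_nth.
by rewrite (leq_trans hx hy) add1n ltnS; apply: IH.
Qed.

Lemma cnt_lt_nth s i y : sorted leq s -> i < size s -> y <= nth 0 s i ->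
  count (fun a => a < y) s <= i.
Proof.
elim: s i => [|x s IH] i //= hs.
have hs' := path_sorted hs.
have hall := order_path_min leq_trans hs.
case: i => [|i] /= hi hy.
  rewrite ltnNge hy /= (@eq_in_count _ _ pred0) ?count_pred0 // => a /(allP hall) hxa /=.
  by rewrite ltnNge (leq_trans hy hxa).
exact: leq_add (leq_b1 _) (IH _ hs' hi hy).
Qed.

Lemma count_wp (P : pred nat) x m k :
  count P (word_pow x m k) = sumn [seq count (fun b => P (b + i * m)) x | i <- iota 0 k].
Proof.
rewrite /word_pow count_flatten -map_comp; congr sumn; apply: eq_map => i /=.
by rewrite /shift_word count_map.
Qed.

Lemma sumn_const (g : nat -> nat) n0 n c :
  (forall i, n0 <= i -> i < n0 + n -> g i = c) -> sumn (map g (iota n0 n)) = n * c.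
Proof.
elim: n n0 => [|n IH] n0 h //=.
rewrite h ?leqnn //; last by lia.
rewrite (IH n0.+1) ?mulSn // => i h1 h2; apply: h; lia.
Qed.

Lemma sumn_split (g : nat -> nat) j k : j < k ->
  sumn (map g (iota 0 k)) = sumn (map g (iota 0 j)) + g j + sumn (map g (iota j.+1 (k - j.+1))).
Proof.
move=> hjk.
rewrite {1}(_ : k = j + (k - j.+1).+1); last by lia.
by rewrite iotaD map_cat sumn_cat add0n /= addnA.
Qed.

Lemma wp_S x m k : word_pow x m k.+1 = word_pow x m k ++ shift_word x (k * m).
Proof. by rewrite /word_pow -addn1 iotaD map_cat flatten_cat /= cats0 add0n. Qed.

Lemma path_shift x n z : sorted leq x -> all (fun a => 1 <= a) x -> z <= n.+1 ->
  path leq z (shift_word x n).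
Proof.
move=> hs ha hz.
apply: (path_le leq_trans hz).
have : path leq 1 x by rewrite path_min_sorted.
move/(homo_path (f := fun a => a + n) (e' := leq)) => /=.
rewrite add1n; apply; move=> a b hab; by rewrite leq_add2r.
Qed.

Lemma wp_sorted x m k : sorted leq x -> all (fun a => 1 <= a <= m) x ->
  path leq 0 (word_pow x m k) && all (fun a => a <= k * m) (word_pow x m k).
Proof.
move=> hs ha.
have ha1 : all (fun a => 1 <= a) x by apply/allP => a /(allP ha) /andP [].
elim: k => [|k /andP [IH1 IH2]]; first by rewrite /word_pow.
rewrite wp_S cat_path IH1 all_cat /=.
apply/and3P; split.
- apply: path_shift => //.
  have := mem_last 0 (word_pow x m k); rewrite inE => /orP [/eqP -> // | /(allP IH2) h].
  exact: leqW h.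
- apply/allP => a /(allP IH2) h; rewrite mulSn; lia.
- apply/allP => b /mapP [a /(allP ha) /andP [h1 h2] ->]; rewrite mulSn; lia.
Qed.

Theorem mainTheorem7 (m : nat) (u v : seq nat) :
  1 <= m ->
  all (fun a => 1 <= a <= m) u -> all (fun a => 1 <= a <= m) v ->
  sorted leq u -> sorted leq v ->
  size u <= size v ->
  let c := first_row_len (u ++ v) - size v in
  forall k : nat, 1 <= k ->
  forall t : nat, 1 <= t <= size u * k - c ->
    letter (word_pow v m k) t < letter (word_pow u m k) (t + c).
Proof.
move=> hm hu1 hv1 hus hvs hrs c k hk t /andP [ht1 ht2].
have h7 : c = size (Frow (u ++ v)) - size v by rewrite /c frl_F.
clearbody c.
have szw : forall x, size (word_pow x m k) = size x * k.
  move=> x; rewrite -count_predT count_wp (@sumn_const _ _ _ (size x)); first by rewrite mulnC.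
  by move=> i _ _; rewrite count_predT.
have /andP [sU _] := (@wp_sorted u m k hus hu1).
have /andP [sV _] := (@wp_sorted v m k hvs hv1).
have {}sU := path_sorted sU; have {}sV := path_sorted sV.
have hrk : size u * k <= size v * k by rewrite leq_mul2r hrs orbT.
rewrite /letter.
set V := word_pow v m k; set U := word_pow u m k.
set y := nth 0 V t.-1.
have htV : t.-1 < size V by rewrite szw; lia.
have yV : y \in V := mem_nth 0 htV.
have [j hj [b hb ey]] : exists2 j, j < k & exists2 b, b \in v & y = b + j * m.
  move: yV => /flattenP [s /mapP [j hj ->] hys]; exists j; first by rewrite mem_iota in hj; lia.
  by move: hys => /mapP [b hb ->]; exists b.
have /andP [hb1 hbm] := allP hv1 b hb.
rewrite ltnNge; apply/negP => hle.
have htU : (t + c).-1 < size U by rewrite szw; lia.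
have h1 := @cnt_le_nth _ _ _ sU htU hle.
have h2 := @cnt_lt_nth _ _ y sV htV (leqnn y).
have h3 : count (fun a => a <= y) U = j * size u + count (fun a => a <= b) u.
  rewrite /U count_wp (@sumn_split _ j k hj) (@sumn_const _ _ _ (size u)); last first.
    move=> i _ hi; rewrite -count_predT; apply: eq_in_count => a /(allP hu1) /andP [h1' h2'] /=.
    rewrite ey; have : i.+1 * m <= j * m by rewrite leq_mul2r; apply/orP; right.
    rewrite mulSn; lia.
  rewrite (@sumn_const _ _ _ 0); last first.
    move=> i hi _; rewrite (@eq_in_count _ _ pred0) ?count_pred0 // => a /(allP hu1) /andP [h1' h2'] /=.
    rewrite ey; have : j.+1 * m <= i * m by rewrite leq_mul2r; apply/orP; right.
    rewrite mulSn; lia.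
  rewrite muln0 addn0 mulnC; congr (_ + _).
  by apply: eq_count => a /=; rewrite ey leq_add2r.
have h4 : count (fun a => a < y) V = j * size v + count (fun a => a < b) v.
  rewrite /V count_wp (@sumn_split _ j k hj) (@sumn_const _ _ _ (size v)); last first.
    move=> i _ hi; rewrite -count_predT; apply: eq_in_count => a /(allP hv1) /andP [h1' h2'] /=.
    rewrite ey; have : i.+1 * m <= j * m by rewrite leq_mul2r; apply/orP; right.
    rewrite mulSn; lia.
  rewrite (@sumn_const _ _ _ 0); last first.
    move=> i hi _; rewrite (@eq_in_count _ _ pred0) ?count_pred0 // => a /(allP hv1) /andP [h1' h2'] /=.
    rewrite ey; have : j.+1 * m <= i * m by rewrite leq_mul2r; apply/orP; right.
    rewrite mulSn; lia.
  rewrite muln0 addn0 mulnC; congr (_ + _).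
  by apply: eq_count => a /=; rewrite ey ltn_add2r.
have h5 := @c_bound u v b hus hvs.
have h6 := count_predC (fun a => a < b) v.
have h8 : j * size u <= j * size v by rewrite leq_mul2l hrs orbT.
rewrite -/U in h1; rewrite -/V in h2; rewrite h3 in h1; rewrite h4 in h2. lia.
Qed.
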